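(* In every approval-based SCV instance, every committee maximizing the IW-PAV score among all committees satisfies IW-JR.
   Context: An approval-based sub-committee voting (SCV) instance consists of a set of voters $N=\{1,\ldots,n\}$, a finite set of candidates $C$ partitioned into candidate subsets $C_1,\ldots,C_\ell$, positive integer quotas $k_j\le |C_j|$, and approval ballots $A_i\subseteq C$ for $i\in N$. A committee is a set $W\subseteq C$ with $|W\cap C_j|=k_j$ for every $j$. Let $r(0)=0$ and $r(t)=\sum_{p=1}^t 1/p$ for $t\ge1$. The IW-PAV score of $W$ is $\sum_{j=1}^\ell\sum_{i\in N} r(|W\cap A_i\cap C_j|)$. $W$ satisfies Intra-wise JR (IW-JR) if for every $X\subseteq N$ and every $j$, whenever $|X|\ge n/k_j$ and $|(\bigcap_{i\in X}A_i)\cap C_j|\ge 1$, we have $|W\cap C_j\cap \bigcup_{i\in X}A_i|\ge 1$. *)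

(* Defs.v *)
From mathcomp Require Import all_boot all_order all_algebra.
Set Implicit Arguments. Unset Strict Implicit. Unset Printing Implicit Defensive.
Import Order.TTheory GRing.Theory Num.Theory.
Local Open Scope ring_scope.

(* The partition C_1..C_l is given
   by a map part : C -> 'I_l (C_j = [set c | part c == j]). *)

Definition cand_part (C : finType) (l : nat) (part : C -> 'I_l) (j : 'I_l)
  : {set C} := [set c | part c == j].

Definition harm (t : nat) : rat := \sum_(1 <= p < t.+1) (p%:R)^-1.

Definition is_committee (C : finType) (l : nat) (part : C -> 'I_l)
  (k : 'I_l -> nat) (W : {set C}) : Prop :=
  forall j : 'I_l, #|W :&: cand_part part j| = k j.

Definition iw_pav (n : nat) (C : finType) (l : nat) (part : C -> 'I_l)
  (A : 'I_n -> {set C}) (W : {set C}) : rat :=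
  \sum_(j < l) \sum_(i < n) harm #|W :&: A i :&: cand_part part j|.

Definition iw_jr (n : nat) (C : finType) (l : nat) (part : C -> 'I_l)
  (k : 'I_l -> nat) (A : 'I_n -> {set C}) (W : {set C}) : Prop :=
  forall (X : {set 'I_n}) (j : 'I_l),
    (n%:R / (k j)%:R <= #|X|%:R :> rat) ->
    (1 <= #|(\bigcap_(i in X) A i) :&: cand_part part j|)%N ->
    (1 <= #|W :&: cand_part part j :&: (\bigcup_(i in X) A i)|)%N.

(* Main.v *)
Require Import Defs.
From mathcomp Require Import all_boot all_order all_algebra.
From mathcomp Require Import ring lra zify.
Import Order.TTheory GRing.Theory Num.Theory.
Local Open Scope ring_scope.

Lemma harm0 : harm 0 = 0.
Proof. by rewrite /harm big_geq. Qed.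

Lemma harmS t : harm t.+1 = harm t + (t.+1)%:R^-1.
Proof. by rewrite /harm big_nat_recr. Qed.

Lemma harm_mono m p : (m <= p)%N -> harm m <= harm p.
Proof.
elim: p => [|p IH]; first by rewrite leqn0 => /eqP ->.
rewrite leq_eqVlt => /orP[/eqP -> //|]; rewrite ltnS => /IH h.
rewrite harmS; apply: (le_trans h); rewrite lerDl invr_ge0; exact: ler0n.
Qed.

Lemma harm_ge1 t : (1 <= t)%N -> 1 <= harm t.
Proof.
move=> h; have := harm_mono _ _ h; by rewrite harmS harm0 add0r invr1.
Qed.

Lemma harm_diff t t' : (0 < t)%N -> (t <= t'.+1)%N -> - (t%:R^-1) <= harm t' - harm t.
Proof.
case: t => // t _ h. rewrite harmS.
by rewrite opprD addrA -[X in X <= _]add0r lerD2r subr_ge0 harm_mono.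
Qed.

Theorem mainTheorem9 (n : nat) (C : finType) (l : nat) (part : C -> 'I_l)
  (k : 'I_l -> nat) (A : 'I_n -> {set C})
  (hn : (0 < n)%N)
  (hk : forall j : 'I_l, (0 < k j <= #|cand_part part j|)%N)
  (W : {set C})
  (hW : is_committee part k W)
  (hmax : forall W' : {set C}, is_committee part k W' ->
            iw_pav part A W' <= iw_pav part A W) :
  iw_jr part k A W.
Proof.
move=> X j hX hc.
have kpos : (0 < k j)%N by case/andP: (hk j).
have hnX : (n <= k j * #|X|)%N.
  have : n%:R <= #|X|%:R * (k j)%:R :> rat by rewrite -ler_pdivrMr // ltr0n.
  by rewrite -natrM ler_nat mulnC.
have X0 : (0 < #|X|)%N by lia.
rewrite lt0n; apply/negP => /eqP h0.
have E0 := cards0_eq h0.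
have tX : forall i, i \in X -> W :&: A i :&: cand_part part j = set0.
  move=> i iX; apply/setP => x; rewrite [RHS]inE; apply/negP => xin.
  have : x \in W :&: cand_part part j :&: \bigcup_(i in X) A i.
    move: xin; rewrite !inE => /andP[/andP[-> xA] ->] /=.
    by apply/bigcupP; exists i.
  by rewrite E0 inE.
move: hc; rewrite card_gt0 => /set0Pn [c]; rewrite inE => /andP[/bigcapP cA].
rewrite inE => /eqP cC.
move: X0; rewrite card_gt0 => /set0Pn [i0 i0X].
have cW : c \notin W.
  apply/negP => cW; have := tX i0 i0X; move/setP/(_ c).
  by rewrite !inE cW cA // cC eqxx.
have hsame : forall w (B : {set C}), c \notin B -> w \notin B -> (c |: (W :\ w)) :&: B = W :&: B.
  move=> w B cB wB; apply/setP => x; rewrite !inE.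
  case: (eqVneq x c) => [->|_]; first by rewrite (negbTE cB) !andbF.
  case: (eqVneq x w) => [->|_] /=; first by rewrite (negbTE wB) !andbF.
  done.
have hcom : forall w, w \in W -> part w = j -> is_committee part k (c |: (W :\ w)).
  move=> w wW wj j'; case: (eqVneq j' j) => [->|nj].
    have -> : (c |: (W :\ w)) :&: cand_part part j = c |: ((W :&: cand_part part j) :\ w).
      apply/setP => x; rewrite !inE; case: (eqVneq x c) => [->|] /=; first by rewrite cC eqxx.
      by move=> _; rewrite andbA.
    rewrite cardsU1 !inE (negbTE cW) !andbF /= -(hW j) (cardsD1 w (W :&: cand_part part j)).
    by rewrite !inE wW wj eqxx.
  rewrite hsame; first exact: hW.
    by rewrite inE cC eq_sym.
  by rewrite inE wj eq_sym.
pose delta w i := harm #|(c |: (W :\ w)) :&: A i :&: cand_part part j|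
                  - harm #|W :&: A i :&: cand_part part j|.
have hdiff : forall w, w \in W -> part w = j ->
   iw_pav part A (c |: (W :\ w)) - iw_pav part A W = \sum_(i < n) delta w i.
  move=> w wW wj; rewrite /iw_pav -sumrB (bigD1 j) //= [X in _ + X]big1 ?addr0; first by rewrite /delta sumrB.
  move=> j' nj; rewrite -sumrB; apply: big1 => i _; rewrite -!setIA hsame ?subrr //.
    by rewrite !inE cC eq_sym (negbTE nj) andbF.
  by rewrite !inE wj eq_sym (negbTE nj) andbF.
have hle : forall w, w \in W -> part w = j -> \sum_(i < n) delta w i <= 0.
  by move=> w wW wj; rewrite -hdiff // subr_le0; apply: hmax; apply: hcom.
pose tt i := #|W :&: A i :&: cand_part part j|.
pose L i w : rat := if i \in X then 1 else - ((w \in A i)%:R * (tt i)%:R^-1).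
have hL : forall w i, w \in W -> part w = j -> L i w <= delta w i.
  move=> w i wW wj; rewrite /L /delta; case: ifP => iX.
    rewrite (tX i iX) cards0 harm0 subr0 harm_ge1 // card_gt0; apply/set0Pn; exists c.
    by rewrite !inE eqxx cA // cC eqxx.
  case wA: (w \in A i).
    rewrite mul1r; apply: harm_diff.
      by rewrite card_gt0; apply/set0Pn; exists w; rewrite !inE wW wA wj eqxx.
    have sub : W :&: A i :&: cand_part part j \subset
               w |: ((c |: (W :\ w)) :&: A i :&: cand_part part j).
      apply/subsetP => x; rewrite !inE; case: (eqVneq x w) => //= _.
      by move=> /andP[/andP[-> ->] ->]; rewrite orbT.
    apply: (leq_trans (subset_leq_card sub)); rewrite cardsU1.
    by rewrite -add1n leq_add2r leq_b1.
  rewrite mul0r oppr0 subr_ge0 harm_mono // subset_leq_card //.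
  apply/subsetP => x; rewrite !inE => /andP[/andP[xW xA] xC].
  rewrite xW xA xC; case: (eqVneq x w) xA => [->|]; rewrite ?wA ?orbT //.
have neg : \sum_(w in W :&: cand_part part j) \sum_(i < n) delta w i
           <= \sum_(w in W :&: cand_part part j) (0 : rat).
  apply: ler_sum => w; rewrite !inE => /andP[wW /eqP wj]; exact: hle.
rewrite [X in _ <= X]big1 // in neg.
have key : 0 < \sum_(w in W :&: cand_part part j) \sum_(i < n) delta w i.
  have : \sum_(w in W :&: cand_part part j) \sum_(i < n) L i w
         <= \sum_(w in W :&: cand_part part j) \sum_(i < n) delta w i.
    apply: ler_sum => w; rewrite !inE => /andP[wW /eqP wj].
    by apply: ler_sum => i _; apply: hL.
  apply: lt_le_trans; rewrite exchange_big /=.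
  have hLsum : forall i : 'I_n, (if i \in X then (k j).+1%:R else 0) - 1
              <= \sum_(w in W :&: cand_part part j) L i w.
    move=> i; rewrite /L; case: ifP => iX.
      by rewrite sumr_const hW -addn1 natrD addrK.
    rewrite add0r sumrN -mulr_suml lerN2.
    have -> : \sum_(w in W :&: cand_part part j) ((w \in A i)%:R : rat) = (tt i)%:R.
      rewrite -natr_sum; congr (_%:R).
      rewrite (eq_bigr (fun w => if w \in A i then 1 else 0)%N); last by move=> w _; case: (w \in A i).
      rewrite -big_mkcondr sum1dep_card; apply: eq_card => x; rewrite !inE.
      by rewrite andbAC.
    case: (eqVneq (tt i) 0%N) => [->|nz]; first by rewrite mul0r ler01.
    by rewrite mulfV // pnatr_eq0.
  apply: (lt_le_trans _ (ler_sum _ (fun i _ => hLsum i))).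
  rewrite sumrB -big_mkcond /= sumr_const sumr_const card_ord.
  have X1 : (0 < #|X|)%N by apply/card_gt0P; exists i0.
  rewrite -[_ *+ #|X|]mulr_natr -natrM subr_gt0 ltr_nat; lia.
by have := lt_le_trans key neg; rewrite ltxx.
Qed.
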